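(* A numerical semigroup $S$ with multiplicity $e$ and blowup $B$ is additive if and only if ${\rm adj}(S)=\operatorname{Ap}(B;e)$.
   Context: $S$ is a numerical semigroup (a submonoid of $\mathbb N$ with finite complement) with minimal generators $e<a_1<\dots<a_t$. ${\rm ord}(n;S)$ is the maximum of $\sum c_i$ over $(c_0,\dots,c_t)\in\mathbb N^{t+1}$ with $c_0e+\sum c_ia_i=n$. $S$ is additive if ${\rm ord}(u+e;S)={\rm ord}(u;S)+1$ for all $u\in S$. ${\rm adj}(S)=\{s-{\rm ord}(s;S)e:s\in S\}$. The blowup is $B=\langle e,a_1-e,\dots,a_t-e\rangle$, and $\operatorname{Ap}(B;e)=\{w\in B:w-e\notin B\}$. *)

(* Defs.v *)
From mathcomp Require Import all_boot.
Set Implicit Arguments. Unset Strict Implicit. Unset Printing Implicit Defensive.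

Definition numerical_semigroup (S : nat -> Prop) : Prop :=
  [/\ S 0,
      (forall x y, S x -> S y -> S (x + y)) &
      (exists N, forall n, N <= n -> S n)].

Definition multiplicity (S : nat -> Prop) (e : nat) : Prop :=
  [/\ S e, 0 < e & forall s, S s -> 0 < s -> e <= s].

Definition min_gen (S : nat -> Prop) (a : nat) : Prop :=
  [/\ S a, 0 < a & ~ (exists b c, [/\ S b, S c, 0 < b, 0 < c & a = b + c])].

(* A factorization of n over the minimal generators of S, written as the list
   of generators used (with repetition); its length is sum_i c_i. *)
Definition factorization (S : nat -> Prop) (n : nat) (l : seq nat) : Prop :=
  (forall a, a \in l -> min_gen S a) /\ sumn l = n.

Definition is_ord (S : nat -> Prop) (n k : nat) : Prop :=
  (exists l, factorization S n l /\ size l = k) /\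
  (forall l, factorization S n l -> size l <= k).

Definition additive (S : nat -> Prop) (e : nat) : Prop :=
  forall u k, S u -> is_ord S u k -> is_ord S (u + e) k.+1.

Definition adj (S : nat -> Prop) (e : nat) (x : nat) : Prop :=
  exists s k, [/\ S s, is_ord S s k & x = s - k * e].

Definition blowup_gen (S : nat -> Prop) (e g : nat) : Prop :=
  g = e \/ exists a, [/\ min_gen S a, a <> e & g = a - e].

Definition blowup (S : nat -> Prop) (e : nat) (x : nat) : Prop :=
  exists l : seq nat, (forall g, g \in l -> blowup_gen S e g) /\ sumn l = x.

(* Apery set Ap(B; e) = { w in B : w - e notin B } (w - e an integer). *)
Definition apery (B : nat -> Prop) (e : nat) (w : nat) : Prop :=
  B w /\ ~ (e <= w /\ B (w - e)).

(* Main.v *)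
From Stdlib Require Import Classical.
Require Import Defs.
From mathcomp Require Import all_boot.
From mathcomp Require Import zify.
Set Implicit Arguments. Unset Strict Implicit.

Lemma mg_ge (S : nat -> Prop) e a : multiplicity S e -> min_gen S a -> e <= a.
Proof. by case=> _ _ H [Sa a0 _]; apply: H. Qed.

Lemma e_mg (S : nat -> Prop) e : multiplicity S e -> min_gen S e.
Proof.
case=> Se e0 H; split=> // -[b [c [Sb Sc b0 c0 E]]].
have := H _ Sb b0; have := H _ Sc c0; lia.
Qed.

Lemma size_sumn (S : nat -> Prop) e (l : seq nat) : multiplicity S e ->
  (forall a, a \in l -> min_gen S a) -> size l * e <= sumn l.
Proof.
move=> M; elim: l => [|a l IH] H //=.
have := mg_ge M (H a (mem_head _ _)).
have := IH (fun b Hb => H b (introT orP (or_intror Hb))). rewrite /= mulSn; lia.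
Qed.

Lemma bl_add (S : nat -> Prop) e x y : blowup S e x -> blowup S e y -> blowup S e (x + y).
Proof.
move=> [l1 [H1 <-]] [l2 [H2 <-]]; exists (l1 ++ l2); split; last by rewrite sumn_cat.
by move=> g; rewrite mem_cat => /orP [/H1|/H2].
Qed.

Lemma bl_e (S : nat -> Prop) e d : blowup S e (d * e).
Proof.
exists (nseq d e); split; last by rewrite sumn_nseq mulnC.
by move=> g /nseqP [-> _]; left.
Qed.

Lemma B1 (S : nat -> Prop) e (l : seq nat) : multiplicity S e ->
  (forall a, a \in l -> min_gen S a) -> blowup S e (sumn l - size l * e).
Proof.
move=> M; elim: l => [|a l IH] H /=.
  by exists [::].
have Ha := H a (mem_head _ _).
have Hl : forall b, b \in l -> min_gen S b by move=> b Hb; apply: H; rewrite inE Hb orbT.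
have := mg_ge M Ha; have := size_sumn M Hl => h1 h2.
have [b [Hb Sb]] := IH Hl.
case: (eqVneq a e) => [->|ne].
  exists b; split => //; rewrite Sb /= mulSn; lia.
exists ((a - e) :: b); split.
  move=> g; rewrite inE => /orP [/eqP ->|/Hb //]; right; exists a; split => //; exact/eqP.
rewrite /= Sb mulSn. lia.
Qed.

Lemma H_bl (S : nat -> Prop) e (l : seq nat) d : multiplicity S e ->
  (forall a, a \in l -> min_gen S a) -> blowup S e (sumn l - size l * e + d * e).
Proof. by move=> M H; apply: bl_add; [apply: B1|apply: bl_e]. Qed.

Lemma G_bl (S : nat -> Prop) e w : multiplicity S e -> blowup S e w ->
  exists (l : seq nat) d, (forall a, a \in l -> min_gen S a) /\ w + size l * e = sumn l + d * e.
Proof.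
move=> M [b [Hb <-]]; elim: b Hb => [|g b IH] Hb.
  by exists [::], 0; split.
have [l [d [Hl E]]] := IH (fun x hx => Hb x (introT orP (or_intror hx))).
case: (Hb g (mem_head _ _)) => [->|[a [Ha ne ->]]].
  exists l, d.+1; split => //=; rewrite mulSn; lia.
exists (a :: l), d; split.
  by move=> x; rewrite inE => /orP [/eqP ->|/Hl].
have := mg_ge M Ha; rewrite /=; lia.
Qed.

Lemma max_ex (P : nat -> Prop) N m : P m -> (forall k, P k -> k <= N) ->
  exists k, P k /\ forall j, P j -> j <= k.
Proof.
move=> Pm HN.
suff: forall d m, P m -> N - m <= d -> exists k, P k /\ forall j, P j -> j <= k.
  by move=> /(_ (N - m) m Pm (leqnn _)).
elim=> [|d IH] m' Pm' Hd.
  exists m'; split => // j Pj; have := HN _ Pj; have := HN _ Pm'; lia.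
case: (classic (exists j, P j /\ m' < j)) => [[j [Pj lt]]|nex].
  apply: (IH j Pj); have := HN _ Pj; lia.
exists m'; split => // j Pj; case: (ltnP m' j) => // lt.
by exfalso; apply: nex; exists j.
Qed.

Lemma ordex (S : nat -> Prop) e s l : multiplicity S e -> factorization S s l ->
  exists k, is_ord S s k.
Proof.
move=> M F.
have HN : forall k, (exists l, factorization S s l /\ size l = k) -> k <= s.
  move=> k [l0 [[H0 E0] <-]]; have := size_sumn M H0; case: M => _ e0 _; nia.
have [k [[l' [F' <-]] Hm]] := max_ex (ex_intro _ l (conj F erefl)) HN.
exists (size l'); split; first by exists l'.
by move=> l0 F0; apply: Hm; exists l0.
Qed.

Lemma ord_uniq (S : nat -> Prop) s k k' : is_ord S s k -> is_ord S s k' -> k = k'.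
Proof.
move=> [[l [F <-]] H] [[l' [F' <-]] H'].
by apply/eqP; rewrite eqn_leq H' // H.
Qed.

Lemma S_mul (S : nat -> Prop) e s m : numerical_semigroup S -> multiplicity S e ->
  S s -> S (s + m * e).
Proof.
move=> [_ Sadd _] [Se _ _] Ss; elim: m => [|m IH]; first by rewrite addn0.
by rewrite mulSn addnCA; apply: Sadd.
Qed.

Lemma add_iter (S : nat -> Prop) e s k m : numerical_semigroup S -> multiplicity S e ->
  additive S e -> S s -> is_ord S s k -> is_ord S (s + m * e) (k + m).
Proof.
move=> NS M A Ss O; elim: m => [|m IH]; first by rewrite addn0 mul0n addn0.
have := A _ _ (S_mul m NS M Ss) IH.
by rewrite mulSn addnS (addnC e) addnA.
Qed.

Lemma S_sum (S : nat -> Prop) (l : seq nat) : numerical_semigroup S ->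
  (forall a, a \in l -> min_gen S a) -> S (sumn l).
Proof.
case=> S0 Sadd _; elim: l => [|a l IH] Hl //=.
apply: Sadd; first by case: (Hl a (mem_head _ _)).
by apply: IH => b hb; apply: Hl; rewrite inE hb orbT.
Qed.

Theorem proposition4p7 (S : nat -> Prop) (e : nat) :
  numerical_semigroup S -> multiplicity S e ->
  (additive S e <-> (forall x, adj S e x <-> apery (blowup S e) e x)).
Proof.
move=> NS M.
have e0 : 0 < e by case: M.
have Emg := e_mg M.
have ApAdj : forall x, apery (blowup S e) e x -> adj S e x.
  move=> w [Bw nB].
  have [l [d [Hl E]]] := G_bl M Bw.
  have sz := size_sumn M Hl.
  case: d E => [|d] E; last first.
    exfalso; apply: nB; split; first nia.
    have := H_bl d M Hl.
    have -> : sumn l - size l * e + d * e = w - e by nia.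
    done.
  have [k Ok] := ordex M (conj Hl erefl).
  have km : size l <= k by case: Ok => _ /(_ l (conj Hl erefl)).
  case: (ltnP (size l) k) => lt; last first.
    have ek : k = size l by lia.
    rewrite ek in Ok.
    exists (sumn l), (size l); split => //.
      exact: S_sum NS Hl.
    lia.
  exfalso; apply: nB.
  case: Ok => [[L [[HL SL] zL]] _].
  have szL := size_sumn M HL.
  split; first nia.
  have := H_bl (k - size l - 1) M HL.
  rewrite SL zL.
  have -> : sumn l - k * e + (k - size l - 1) * e = w - e.
    rewrite -SL in szL *; rewrite zL in szL; nia.
  done.
split.
- move=> A x; split; last exact: ApAdj.
  move=> [s [k [Ss Ok ->]]].
  case: (Ok) => [[l [[Hl Sl] zl]] _].
  have szl := size_sumn M Hl.
  split.
    by have := B1 M Hl; rewrite Sl zl.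
  move=> [le Bx].
  have [l' [d [Hl' E]]] := G_bl M Bx.
  have O2 := add_iter (size l') NS M A Ss Ok.
  case: O2 => _ /(_ (l' ++ nseq (d + k + 1) e)).
  rewrite size_cat size_nseq.
  have : sumn (l' ++ nseq (d + k + 1) e) = s + size l' * e.
    rewrite sumn_cat sumn_nseq; rewrite Sl zl in szl *; nia.
  move=> SS H; have : size l' + (d + k + 1) <= k + size l'.
    apply: H; split => //.
    by move=> a; rewrite mem_cat => /orP [/Hl'|/nseqP [-> _]].
  lia.
- move=> Hx u k Su Ok.
  case: (Ok) => [[l [[Hl Sl] zl]] _].
  have F1 : factorization S (u + e) (e :: l).
    split; last by rewrite /= Sl addnC.
    by move=> a; rewrite inE => /orP [/eqP ->|/Hl].
  have [k' Ok'] := ordex M F1.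
  have ge : k.+1 <= k'.
    by case: Ok' => _ /(_ _ F1); rewrite /= zl.
  suff : k' <= k.+1 by move=> le; have -> : k.+1 = k' by lia.
  case: (leqP k' k.+1) => // lt; exfalso.
  have [_ nB] := (Hx (u - k * e)).1 (ex_intro _ u (ex_intro _ k (And3 Su Ok erefl))).
  apply: nB.
  case: Ok' => [[L [[HL SL] zL]] _].
  have szL := size_sumn M HL.
  have szl := size_sumn M Hl.
  rewrite zL in szL; rewrite zl Sl in szl.
  split; first nia.
  have := H_bl (k' - k - 2) M HL.
  rewrite SL zL.
  have -> : u + e - k' * e + (k' - k - 2) * e = u - k * e - e by nia.
  done.
Qed.
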